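(* Suppose $H$ satisfies (B.1) and (B.2) and, for each fixed $s\in\mathbb{R}^n$, the functional $(t,x(\cdot))\mapsto H(t,x(\cdot),s)$ is non-anticipative. If a minimax solution $\varphi$ of the problem $\partial_t\varphi+H(t,x(\cdot),\nabla\varphi)=0$ on $[0,T)\times C([-h,T],\mathbb{R}^n)$, $\varphi(T,x(\cdot))=\sigma(x(\cdot))$, is $ci$-differentiable at some point $(t,x(\cdot))\in[0,T)\times C([-h,T],\mathbb{R}^n)$, then $\partial_t\varphi(t,x(\cdot))+H(t,x(\cdot),\nabla\varphi(t,x(\cdot)))=0$ at this point.
   Context: Fix $n\in\mathbb{N}$, $h>0$, $T>0$; $\langle\cdot,\cdot\rangle$, $\|\cdot\|$ Euclidean. $C([-h,T],\mathbb{R}^n)$ has the sup norm $\|\cdot\|_{[-h,T]}$, and $[0,T]\times C([-h,T],\mathbb{R}^n)$ the metric $|t-\tau|+\|x(\cdot)-y(\cdot)\|_{[-h,T]}$. Non-anticipative: $\varphi(t,x(\cdot))=\varphi(t,y(\cdot))$ whenever $t\in[0,T)$ and $x=y$ on $[-h,t]$. $\mathrm{Lip}(t,x(\cdot))$: functions $y(\cdot)\in C([-h,T],\mathbb{R}^n)$ with $y=x$ on $[-h,t]$, Lipschitz on $[t,T]$. $ci$-differentiable at $(t,x(\cdot))$, $t<T$: there exist $\partial_t\varphi(t,x(\cdot))\in\mathbb{R}$, $\nabla\varphi(t,x(\cdot))\in\mathbb{R}^n$ with $\varphi(\tau,y(\cdot))-\varphi(t,x(\cdot))=\partial_t\varphi(t,x(\cdot))(\tau-t)+\langle\nabla\varphi(t,x(\cdot)),y(\tau)-x(t)\rangle+o(\tau-t)$,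 $\tau\in(t,T]$, for every $y(\cdot)\in\mathrm{Lip}(t,x(\cdot))$, $o(\delta)/\delta\to0$ as $\delta\downarrow0$ ($o$ may depend on $y$). $H:[0,T]\times C([-h,T],\mathbb{R}^n)\times\mathbb{R}^n\to\mathbb{R}$, $\sigma:C([-h,T],\mathbb{R}^n)\to\mathbb{R}$. (B.1) $H$, $\sigma$ continuous. (B.2) there is $c>0$ with $|H(t,x(\cdot),s)-H(t,x(\cdot),r)|\le c(1+\max_{\tau\in[-h,t]}\|x(\tau)\|)\|s-r\|$ for all $t,x(\cdot),s,r$. $Y(t,x(\cdot))$: the $y(\cdot)\in\mathrm{Lip}(t,x(\cdot))$ with $\|\dot y(\tau)\|\le c(1+\max_{\xi\in[-h,\tau]}\|y(\xi)\|)$ for a.e. $\tau\in[t,T]$. Minimax solution: $\varphi$ non-anticipative, continuous, $\varphi(T,\cdot)=\sigma$, and (M): for every $(t,x(\cdot))\in[0,T)\times C([-h,T],\mathbb{R}^n)$ and $s\in\mathbb{R}^n$ there is $y(\cdot)\in Y(t,x(\cdot))$ with $\varphi(\tau,y(\cdot))-\varphi(t,x(\cdot))=\langle s,y(\tau)-x(t)\rangle-\int_t^\tau H(\xi,y(\cdot),s)\,d\xi$ for all $\tau\in[t,T]$. *)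

(* Defs.v *)
From HB Require Import structures.
From mathcomp Require Import all_boot all_order all_algebra.
From mathcomp Require Import all_classical all_reals all_analysis.
Set Implicit Arguments. Unset Strict Implicit. Unset Printing Implicit Defensive.
Import Order.TTheory GRing.Theory Num.Theory.
Import numFieldNormedType.Exports.
Local Open Scope classical_set_scope.
Local Open Scope ring_scope.

Section Defs.
Variables (R : realType) (n : nat) (h T : R).

Definition edot (u v : 'rV[R]_n) : R := \sum_(i < n) u ord0 i * v ord0 i.
Definition enorm (u : 'rV[R]_n) : R := Num.sqrt (edot u u).

(* C([-h,T],R^n): functions R -> R^n continuous on [-h,T], extended as
   constants outside [-h,T] (canonical representative). *)
Definition is_path (x : R -> 'rV[R]_n) : Prop :=
  {within `[-h, T], continuous x} /\
  (forall s, s < -h -> x s = x (-h)) /\ (forall s, T < s -> x s = x T).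

Definition pmax (x : R -> 'rV[R]_n) (b : R) : R :=
  sup [set enorm (x s) | s in `[-h, b]].
Definition supd (x y : R -> 'rV[R]_n) : R :=
  sup [set enorm (x s - y s) | s in `[-h, T]].

Definition cont_TC (phi : R -> (R -> 'rV[R]_n) -> R) : Prop :=
  forall t x, 0 <= t <= T -> is_path x ->
  forall e : R, 0 < e -> exists2 d : R, 0 < d &
    forall tau y, 0 <= tau <= T -> is_path y ->
      `|t - tau| + supd x y < d -> `|phi tau y - phi t x| < e.

Definition cont_C (sigma : (R -> 'rV[R]_n) -> R) : Prop :=
  forall x, is_path x ->
  forall e : R, 0 < e -> exists2 d : R, 0 < d &
    forall y, is_path y -> supd x y < d -> `|sigma y - sigma x| < e.

Definition cont_H (H : R -> (R -> 'rV[R]_n) -> 'rV[R]_n -> R) : Prop :=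
  forall t x s, 0 <= t <= T -> is_path x ->
  forall e : R, 0 < e -> exists2 d : R, 0 < d &
    forall tau y r, 0 <= tau <= T -> is_path y ->
      `|t - tau| + supd x y + enorm (s - r) < d ->
      `|H tau y r - H t x s| < e.

Definition condB2 (c : R) (H : R -> (R -> 'rV[R]_n) -> 'rV[R]_n -> R) : Prop :=
  forall t x s r, 0 <= t <= T -> is_path x ->
    `|H t x s - H t x r| <= c * (1 + pmax x t) * enorm (s - r).

Definition nonanticipative (phi : R -> (R -> 'rV[R]_n) -> R) : Prop :=
  forall t x y, 0 <= t < T -> is_path x -> is_path y ->
    (forall s, -h <= s <= t -> x s = y s) -> phi t x = phi t y.

Definition Lip (t : R) (x y : R -> 'rV[R]_n) : Prop :=
  is_path y /\ (forall s, -h <= s <= t -> y s = x s) /\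
  exists L : R, forall a b, t <= a <= T -> t <= b <= T ->
    enorm (y a - y b) <= L * `|a - b|.

Definition inY (c t : R) (x y : R -> 'rV[R]_n) : Prop :=
  Lip t x y /\
  exists N : set R, (@lebesgue_measure R).-negligible N /\
    forall tau, t <= tau <= T -> ~ N tau ->
      derivable y tau 1 /\ enorm ('D_1 y tau) <= c * (1 + pmax y tau).

Definition minimax (c : R) (H : R -> (R -> 'rV[R]_n) -> 'rV[R]_n -> R)
  (sigma : (R -> 'rV[R]_n) -> R) (phi : R -> (R -> 'rV[R]_n) -> R) : Prop :=
  nonanticipative phi /\ cont_TC phi /\
  (forall x, is_path x -> phi T x = sigma x) /\
  (forall t x s, 0 <= t < T -> is_path x ->
    exists y, inY c t x y /\
      forall tau, t <= tau <= T ->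
        phi tau y - phi t x =
        edot s (y tau - x t) -
        Rintegral (@lebesgue_measure R) `[t, tau] (fun xi => H xi y s)).

Definition ci_diff (phi : R -> (R -> 'rV[R]_n) -> R) (t : R)
  (x : R -> 'rV[R]_n) (a : R) (g : 'rV[R]_n) : Prop :=
  forall y, Lip t x y ->
  forall e : R, 0 < e -> exists2 d : R, 0 < d &
    forall tau, t < tau <= T -> tau - t < d ->
      `|phi tau y - phi t x - a * (tau - t) - edot g (y tau - x t)|
        <= e * (tau - t).

End Defs.

(* Main.v *)
Require Import Defs.
From HB Require Import structures.
From mathcomp Require Import all_boot all_order all_algebra.
From mathcomp Require Import all_classical all_reals all_analysis.
From mathcomp Require Import lra ring.
Import Order.TTheory GRing.Theory Num.Theory.
Import numFieldNormedType.Exports.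
Local Open Scope classical_set_scope.
Local Open Scope ring_scope.

Lemma enorm0 (R : realType) (n : nat) : enorm (0 : 'rV[R]_n) = 0.
Proof.
rewrite /enorm /edot big1 ?sqrtr0 // => i _; by rewrite mxE mul0r.
Qed.

Lemma supd_self (R : realType) (n : nat) (h T : R) (y : R -> 'rV[R]_n) :
  -h <= T -> supd h T y y = 0.
Proof.
move=> hT; rewrite /supd.
have -> : [set enorm (y s - y s) | s in `[-h, T]] = [set (0:R)].
  apply/seteqP; split => z /=.
    by move=> [s _ <-]; rewrite subrr enorm0.
  move=> ->; exists (-h); first by rewrite /= in_itv /= lexx hT.
  by rewrite subrr enorm0.
exact: sup1.
Qed.

Lemma clamp_lip (R : realType) (t u z w : R) : t <= u ->
  `|(if z < t then t else if u < z then u else z) -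
    (if w < t then t else if u < w then u else w)| <= `|z - w|.
Proof.
move=> tu; have h1 := ler_norm (z - w).
have h2 : w - z <= `|z - w| by rewrite distrC ler_norm.
rewrite ler_norml; case: (ltP z t) => ?; case: (ltP u z) => ?;
  case: (ltP w t) => ?; case: (ltP u w) => ?; apply/andP; split; lra.
Qed.

Lemma cont_int (R : realType) (g : R -> R) (t u : R) :
  continuous g -> (@lebesgue_measure R).-integrable `[t, u] (EFin \o g).
Proof.
move=> cg; apply: continuous_compact_integrable; first exact: segment_compact.
exact: continuous_subspaceT.
Qed.

Lemma muitv (R : realType) (t u : R) : t <= u ->
  fine ((@lebesgue_measure R) `[t, u]) = u - t.
Proof.
move=> tu; rewrite lebesgue_measure_itv /=.
case: ltP => ut /=; first by [].
rewrite lee_fin in ut.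
have -> : u = t by apply/eqP; rewrite eq_le tu ut.
by rewrite subrr.
Qed.

Lemma int_bound (R : realType) (f g : R -> R) (t u C e : R) : t <= u ->
  continuous g -> (forall xi, t <= xi <= u -> f xi = g xi) ->
  (forall xi, t <= xi <= u -> `|g xi - C| <= e) ->
  `|Rintegral (@lebesgue_measure R) `[t, u] f - C * (u - t)| <= e * (u - t).
Proof.
move=> tu cg fg ge.
have -> : Rintegral (@lebesgue_measure R) `[t, u] f =
    Rintegral (@lebesgue_measure R) `[t, u] g.
  by apply: eq_Rintegral => xi; rewrite inE /= in_itv /= => /fg.
have mD : measurable (`[t, u] : set R) by [].
have ci : forall k : R -> R, continuous k ->
    (@lebesgue_measure R).-integrable `[t, u] (EFin \o k).
  by move=> k ck; exact: cont_int.
have cC : continuous (fun _ : R => C) by move=> z; exact: cvg_cst.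
have cgC : continuous (fun z => g z - C).
  by move=> z; apply: cvgB; [exact: cg|exact: cvg_cst].
rewrite -(@muitv R t u tu) -Rintegral_cst // -RintegralB //; [|exact: ci|exact: ci].
apply: le_trans; first apply: le_normr_Rintegral => //; first exact: ci.
rewrite -Rintegral_cst //; apply: le_Rintegral => //.
- apply: ci => z; apply: (continuous_comp (cgC z)); exact: norm_continuous.
- by apply: ci => z; exact: cvg_cst.
Qed.

Theorem proposition6 (R : realType) (n : nat) (h T c : R)
  (H : R -> (R -> 'rV[R]_n) -> 'rV[R]_n -> R)
  (sigma : (R -> 'rV[R]_n) -> R) (phi : R -> (R -> 'rV[R]_n) -> R)
  (t : R) (x : R -> 'rV[R]_n) (a : R) (g : 'rV[R]_n) :
  0 < h -> 0 < T -> 0 < c ->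
  cont_H h T H -> cont_C h T sigma -> condB2 h T c H ->
  (forall s, nonanticipative h T (fun tau y => H tau y s)) ->
  minimax h T c H sigma phi ->
  0 <= t < T -> is_path h T x ->
  ci_diff h T phi t x a g ->
  a + H t x g = 0.
Proof.
move=> h0 T0 c0 cH _ _ Hna [_ [_ [_ mm]]] htt px cid.
have /andP[t0 tT] := htt.
have [y [[Ly _] Heq]] := mm t x g htt px.
have [py [agr _]] := Ly.
have Hty : H t y g = H t x g.
  by apply: (Hna g t y x htt py px) => s hs; rewrite agr.
have hT : -h <= T by lra.
have syy := @supd_self R n h T y hT.
have egg : enorm (g - g) = 0 by rewrite subrr enorm0.
set K := a + H t x g.
suff main : forall e, 0 < e -> `|K| <= e + e.
  apply/normr0_eq0/eqP; rewrite eq_le normr_ge0 andbT.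
  case: (ltP 0 `|K|) => // K0.
  have := main (`|K| / 4); rewrite divr_gt0 // => /(_ isT) => hh; lra.
move=> e e0.
have [d1 d10 Hd1] := cid y Ly e e0.
have t0T : 0 <= t <= T by rewrite t0 ltW.
have [d2 d20 Hd2] := cH t y g t0T py e e0.
set dd := Num.min (Num.min d1 d2) (T - t).
have dd0 : 0 < dd by rewrite !lt_min d10 d20 subr_gt0 tT.
have dd1 : dd <= d1 by rewrite /dd !ge_min lexx.
have dd2 : dd <= d2 by rewrite /dd !ge_min lexx orbT.
have dd3 : dd <= T - t by rewrite /dd !ge_min lexx orbT.
pose tau := t + dd / 2.
have etau : tau = t + dd / 2 by [].
have ttau : t <= tau by rewrite etau; lra.
have tauT : tau <= T by rewrite etau; lra.
set cl := fun z : R => if z < t then t else if tau < z then tau else z.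
have clin : forall z, t <= cl z <= tau.
  move=> z; rewrite /cl; case: (ltP z t) => ?; case: (ltP tau z) => ?;
    apply/andP; split; lra.
set G := fun z => H (cl z) y g.
have cG : continuous G.
  move=> z; apply/cvgrPdist_lt => eps eps0.
  have /andP[cz1 cz2] := clin z.
  have czT : 0 <= cl z <= T by apply/andP; split; lra.
  have [d3 d30 Hd3] := cH (cl z) y g czT py eps eps0.
  apply/nbhs_ballP; exists d3 => // w /= zw.
  have /andP[cw1 cw2] := clin w.
  have cwT : 0 <= cl w <= T by apply/andP; split; lra.
  rewrite distrC; apply: Hd3 => //.
  rewrite syy egg !addr0.
  apply: (le_lt_trans (@clamp_lip R t tau z w ttau)).
  by move: zw; rewrite /ball /=.
have Hint := @int_bound R (fun xi => H xi y g) G t tau (H t x g) e ttau cG.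
have {}Hint : `|Rintegral (@lebesgue_measure R) `[t, tau] (fun xi => H xi y g)
    - H t x g * (tau - t)| <= e * (tau - t).
  apply: Hint.
    move=> xi /andP[x1 x2]; rewrite /G /cl.
    case: (ltP xi t) => ?; first lra.
    by case: (ltP tau xi) => ? //; lra.
  move=> xi /andP[x1 x2].
  have clx : cl xi = xi.
    rewrite /cl; case: (ltP xi t) => ?; first lra.
    by case: (ltP tau xi) => ? //; lra.
  rewrite /G clx -Hty; apply: ltW; apply: Hd2.
    by apply/andP; split; lra.
  exact: py.
  rewrite syy egg !addr0 distrC ger0_norm; lra.
have i1 : t <= tau <= T by rewrite ttau tauT.
have i2 : t < tau <= T by rewrite tauT andbT etau; lra.
have Hphi := Heq tau i1.
have i3 : tau - t < d1 by rewrite etau; lra.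
have Hci := Hd1 tau i2 i3.
rewrite Hphi in Hci.
move: Hci Hint.
set I := Rintegral _ _ _.
set E := edot _ _.
have dpos : 0 < tau - t by rewrite etau; lra.
move=> Hci Hint.
have key : `|K * (tau - t)| <= e * (tau - t) + e * (tau - t).
  have -> : K * (tau - t) = - (E - I - a * (tau - t) - E) - (I - H t x g * (tau - t)).
    by rewrite /K; ring.
  apply: le_trans (ler_normB _ _) _.
  by rewrite normrN; apply: lerD.
move: key; rewrite normrM (gtr0_norm dpos) -mulrDl ler_pM2r //.
Qed.
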